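(* Let $\mathcal I=\mathbb R^d$ with the standard inner product, let $\mathcal G$ be a compact Abelian group with normalized Haar measure $dg$, acting on $\mathcal I$ by a unitary representation $I\mapsto gI$, and let $\mathcal T$ be the unit sphere of $\mathcal I$. For $I\in\mathcal I$ let $\rho_I$ be the law of $g\mapsto gI$ on $(\mathcal G,dg)$, and for $t\in\mathcal T$ let $\rho_I^t$ be the law on $\mathbb R$ of $g\mapsto\langle gI,t\rangle$ (the pushforward of $\rho_I$ under $I\mapsto\langle I,t\rangle$). Define $\mu(I)(t)=\mu^t(I)$ to be the cumulative distribution function of $\rho_I^t$, i.e. $\mu^t(I)(b)=\rho_I^t((-\infty,b])$ for $b\in\mathbb R$. Then for all $I\in\mathcal I$, $t\in\mathcal T$, $$\mu^t(I)(b)=\int \eta_b(\langle I,gt\rangle)\,dg,\qquad b\in\mathbb R,$$ where $\eta_b(a)=H(b-a)$ and $H$ is the Heaviside step function. Moreover, for all $I,I'\in\mathcal I$, $$I\sim I'\iff \mu(I)=\mu(I').$$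
   Context: $I\sim I'$ means there exists $g\in\mathcal G$ with $gI=I'$. $H(x)=1$ for $x\ge 0$ and $H(x)=0$ for $x<0$. *)

(* Defs.v *)
From HB Require Import structures.
From mathcomp Require Import all_boot all_order all_algebra.
From mathcomp Require Import all_classical all_reals all_analysis.
Set Implicit Arguments. Unset Strict Implicit. Unset Printing Implicit Defensive.
Import Order.TTheory GRing.Theory Num.Theory.
Import numFieldNormedType.Exports.
Local Open Scope classical_set_scope.
Local Open Scope ring_scope.

Definition borel_type (G : topologicalZmodType) : Type := G.
HB.instance Definition _ (G : topologicalZmodType) :=
  Choice.copy (borel_type G) G.
HB.instance Definition _ (G : topologicalZmodType) :=
  isPointed.Build (borel_type G) (0 : G).
Lemma borel_sigmaC (G : topologicalZmodType) (A : set (borel_type G)) :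
  <<s (@open G) >> A -> <<s (@open G) >> (~` A).
Proof. by move=> sGA; rewrite -setTD; exact: sigma_algebraCD. Qed.
HB.instance Definition _ (G : topologicalZmodType) :=
  @isMeasurable.Build (sigma_display (@open G)) (borel_type G)
  <<s (@open G) >> (@sigma_algebra0 _ setT (@open G)) (@borel_sigmaC G)
  (@sigma_algebra_bigcup _ setT (@open G)).
Notation Borel G := (borel_type G).

Definition dotv (R : pzRingType) (d : nat) (u v : 'cV[R]_d) : R :=
  \sum_(i < d) u i ord0 * v i ord0.

Definition unit_sphere (R : pzRingType) (d : nat) : set 'cV[R]_d :=
  [set t | dotv t t = 1].

Definition heaviside (R : realDomainType) (x : R) : R := if 0 <= x then 1 else 0.

Definition eta_step (R : realDomainType) (b a : R) : R := heaviside (b - a).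

(* Normalized Haar measure on a compact (Hausdorff) abelian group G:
   a Radon (outer regular on Borel sets, inner regular by compacts on open
   sets), translation-invariant probability measure on the Borel sets. *)
Definition normalized_haar (R : realType) (G : topologicalZmodType)
    (mu : set (Borel G) -> \bar R) : Prop :=
  [/\ mu setT = 1%E,
      (forall (g : G) (A : set G), measurable (A : set (Borel G)) ->
         mu ((fun x : G => g + x) @` A) = mu A),
      (forall A : set G, measurable (A : set (Borel G)) ->
         mu A = ereal_inf [set mu U | U in [set U : set G | open U /\ A `<=` U]]) &
      (forall U : set G, open U ->
         mu U = ereal_sup [set mu K | K in [set K : set G | compact K /\ K `<=` U]])].

(* A (continuous) unitary = orthogonal representation of G on R^d,
   g I := rep g *m I. *)
Definition unitary_rep (R : realType) (G : topologicalZmodType) (d : nat)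
    (rep : G -> 'M[R]_d) : Prop :=
  [/\ rep 0 = 1%:M,
      (forall g h : G, rep (g + h) = rep g *m rep h),
      (forall g : G, (rep g)^T *m rep g = 1%:M) &
      (forall i j : 'I_d, continuous (fun g : G => rep g i j))].

Definition orbit_equiv (R : realType) (G : topologicalZmodType) (d : nat)
    (rep : G -> 'M[R]_d) (I I' : 'cV[R]_d) : Prop :=
  exists g : G, rep g *m I = I'.

Definition proj_law (R : realType) (G : topologicalZmodType) (d : nat)
    (mu : set (Borel G) -> \bar R) (rep : G -> 'M[R]_d) (I t : 'cV[R]_d)
    : set R -> \bar R :=
  pushforward mu (fun g : Borel G => dotv (rep g *m I) t).

Definition mu_t (R : realType) (G : topologicalZmodType) (d : nat)
    (mu : set (Borel G) -> \bar R) (rep : G -> 'M[R]_d) (I t : 'cV[R]_d)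
    (b : R) : \bar R :=
  proj_law mu rep I t `]-oo, b].

(* Main.v *)
Require Import Defs.
From HB Require Import structures.
From mathcomp Require Import all_boot all_order all_algebra.
From mathcomp Require Import all_classical all_reals all_analysis.
From mathcomp Require Import ring lra measurable_realfun.
Import Order.TTheory GRing.Theory Num.Theory.
Import numFieldNormedType.Exports.
Local Open Scope classical_set_scope.
Local Open Scope ring_scope.

Section Alg.
Variables (R : realType) (d : nat).
Implicit Types (u v w : 'cV[R]_d) (A : 'M[R]_d).

Lemma dotvE u v : dotv u v = (u^T *m v) ord0 ord0.
Proof. by rewrite /dotv !mxE; apply: eq_bigr => i _; rewrite mxE. Qed.

Lemma dotvC u v : dotv u v = dotv v u.
Proof. by rewrite /dotv; apply: eq_bigr => i _; rewrite mulrC. Qed.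

Lemma dotv_mull A u v : dotv (A *m u) v = dotv u (A^T *m v).
Proof. by rewrite !dotvE trmx_mul mulmxA. Qed.

Lemma dotvDl u v w : dotv (u + v) w = dotv u w + dotv v w.
Proof. by rewrite /dotv -big_split; apply: eq_bigr => i _; rewrite !mxE mulrDl. Qed.

Lemma dotvNl u v : dotv (- u) v = - dotv u v.
Proof. by rewrite /dotv -sumrN; apply: eq_bigr => i _; rewrite !mxE mulNr. Qed.

Lemma dotvZl (a : R) u v : dotv (a *: u) v = a * dotv u v.
Proof. by rewrite /dotv mulr_sumr; apply: eq_bigr => i _; rewrite !mxE mulrA. Qed.

Lemma dotvZr (a : R) u v : dotv u (a *: v) = a * dotv u v.
Proof. by rewrite dotvC dotvZl dotvC. Qed.

Lemma dotvDr u v w : dotv u (v + w) = dotv u v + dotv u w.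
Proof. by rewrite dotvC dotvDl !(dotvC u). Qed.

Lemma dotvNr u v : dotv u (- v) = - dotv u v.
Proof. by rewrite dotvC dotvNl dotvC. Qed.

Lemma dotv_ge0 u : 0 <= dotv u u.
Proof. by rewrite /dotv; apply: sumr_ge0 => i _; rewrite -expr2 sqr_ge0. Qed.

Lemma dotv_eq0 u : dotv u u = 0 -> u = 0.
Proof.
move=> h; apply/matrixP => i j; rewrite mxE (ord1 j).
have := h; rewrite /dotv => /eqP; rewrite psumr_eq0; last by move=> k _; rewrite -expr2 sqr_ge0.
by move=> /allP /(_ i (mem_index_enum _)) /=; rewrite -expr2 sqrf_eq0 => /eqP.
Qed.

Lemma cs_unit u t : dotv t t = 1 -> dotv u t ^+ 2 <= dotv u u.
Proof.
move=> tt; set a := dotv u t.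
have := dotv_ge0 (u - a *: t).
rewrite dotvDl dotvNl !(dotvC _ (u - a *: t)) !dotvDl !dotvNl !dotvZl.
rewrite !dotvZr tt -/a (dotvC t u) -/a mulr1 expr2; lra.
Qed.

End Alg.

Lemma cont_sum (R : realType) (T : topologicalType) n (F : 'I_n -> T -> R) :
  (forall i, continuous (F i)) -> continuous (fun x => \sum_(i < n) F i x).
Proof.
elim: n F => [|n IH] F hF.
  under eq_fun do rewrite big_ord0; exact: cst_continuous.
under eq_fun do rewrite big_ord_recr /=.
move=> x; apply: (@continuousD _ _ _ (fun x => \sum_(i < n) F (widen_ord (leqnSn n) i) x) (F ord_max)).
  by apply: IH.
exact: hF.
Qed.

Lemma cont_mul (R : realType) (T : topologicalType) (f g : T -> R) :
  continuous f -> continuous g -> continuous (fun x => f x * g x).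
Proof. by move=> hf hg x; exact: (continuousM (hf x) (hg x)). Qed.

Lemma meas_sum (R : realType) dd (T : measurableType dd) n (F : 'I_n -> T -> R) :
  (forall i, measurable_fun setT (F i)) -> measurable_fun setT (fun x => \sum_(i < n) F i x).
Proof.
elim: n F => [|n IH] F hF.
  under eq_fun do rewrite big_ord0; exact: measurable_cst.
under eq_fun do rewrite big_ord_recr /=.
apply: (@measurable_funD _ _ _ _ (fun x => \sum_(i < n) F (widen_ord (leqnSn n) i) x) (F ord_max)).
  by apply: IH.
exact: hF.
Qed.

Lemma meas_mul (R : realType) dd (T : measurableType dd) (f g : T -> R) :
  measurable_fun setT f -> measurable_fun setT g -> measurable_fun setT (fun x => f x * g x).
Proof. by move=> hf hg; apply: (@measurable_funM _ _ _ _ f g). Qed.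

Lemma cont_meas (R : realType) (G : topologicalZmodType) (f : G -> R) :
  continuous f -> measurable_fun [set: Borel G] (f : Borel G -> R).
Proof.
move=> cf; apply: (measurability _ (RGenOpens.measurableE R)) => //.
move=> _ [_ [x [y ->]] <-]; rewrite setTI.
apply: sub_sigma_algebra; apply: open_comp; last exact: interval_open.
by move=> z _; exact: cf.
Qed.

Definition gpt (G : topologicalZmodType) : Type := G.
HB.instance Definition _ (G : topologicalZmodType) := Topological.copy (gpt G) G.
HB.instance Definition _ (G : topologicalZmodType) := isPointed.Build (gpt G) (0 : G).

Section Main.
Variables (R : realType) (G : topologicalZmodType) (d : nat)
    (mu : {measure set (Borel G) -> \bar R}) (rep : G -> 'M[R]_d).
Hypotheses (hG : hausdorff_space G) (cG : compact [set: G])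
  (hmu : normalized_haar mu) (hrep : unitary_rep rep).

Lemma repD g h : rep (g + h) = rep g *m rep h.
Proof. by case: hrep. Qed.

Lemma rep0 : rep 0 = 1%:M.
Proof. by case: hrep. Qed.

Lemma repN g : rep (- g) = (rep g)^T.
Proof.
case: hrep => r0 rD rT _.
have h1 : rep g *m rep (- g) = 1%:M by rewrite -rD subrr.
by rewrite -[RHS]mulmx1 -h1 mulmxA rT mul1mx.
Qed.

Lemma dot_rep g u v : dotv (rep g *m u) (rep g *m v) = dotv u v.
Proof. by case: hrep => _ _ rT _; rewrite dotv_mull mulmxA rT mul1mx. Qed.

Lemma cont_dot I t : continuous (fun g => dotv (rep g *m I) t).
Proof.
case: hrep => _ _ _ rc.
rewrite /dotv; apply: cont_sum => i; apply: cont_mul; last exact: cst_continuous.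
under eq_fun do rewrite mxE.
apply: cont_sum => j; apply: cont_mul; [exact: rc | exact: cst_continuous].
Qed.

Lemma meas_entry i j : measurable_fun [set: Borel G] (fun g : Borel G => rep g i j).
Proof. by case: hrep => _ _ _ rc; apply: (@cont_meas R G). Qed.

Lemma open_meas (U : set G) : open U -> measurable (U : set (Borel G)).
Proof. by move=> oU; apply: sub_sigma_algebra. Qed.

Lemma cont_pre (f : G -> R) (S : set R) : continuous f -> measurable S ->
  measurable ((f @^-1` S) : set (Borel G)).
Proof. by move=> cf mS; rewrite -[X in measurable X]setTI; exact: (@cont_meas _ _ f cf measurableT S mS). Qed.

Lemma haar_trans (A : set G) h : measurable (A : set (Borel G)) ->
  mu [set g | A (h + g)] = mu A.
Proof.
case: hmu => _ tr _ _ mA; rewrite -(tr (- h) A mA); congr (mu _).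
apply/seteqP; split => [g /= Ahg|_ [x Ax <-]] /=.
  by exists (h + g) => //; rewrite addKr.
by rewrite addNKr.
Qed.

Lemma trans_cont (h : G) : continuous (fun x : G => x - h).
Proof.
move=> x; apply: (@continuous_comp _ _ _ (fun x => (x, h)) (fun x : G * G => x.1 - x.2)); last exact: sub_continuous.
by apply: cvg_pair; [exact: cvg_id|exact: cvg_cst].
Qed.

Lemma open_pos (U : set G) : open U -> U !=set0 -> (0 < mu U)%E.
Proof.
move=> oU [u0 Uu0]; rewrite lt0e measure_ge0 andbT.
apply/negP => /eqP U0.
case: hmu => mT _ _ _.
pose F := fun g : G => [set x : G | U (x - g)].
have oF g : open (F g) by apply: (open_comp (f := fun x => x - g)) => // x _; exact: trans_cont.
have cov : [set: G] `<=` \bigcup_(g in [set: G]) F g.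
  move=> x _; exists (x - u0) => //; rewrite /F /= opprB addrC subrK //.
have cc : @cover_compact (gpt G) [set: G] by rewrite -compact_cover.
have := cc G [set: G] F (fun g _ => oF g) cov.
move=> [D' _]; set S := (X in cover X F) => sub.
have : (mu [set: Borel G] <= \sum_(i \in S) mu (F i))%E.
  apply: content_sub_fsum => //.
  all: try (by move=> i _; apply: open_meas).
  all: try exact: finite_fset.
rewrite mT fsbig1 ?lee_fin ?ler10 // => i _.
have -> : F i = [set g | U (- i + g)] by apply/seteqP; split => x; rewrite /F /= addrC.
by rewrite haar_trans ?U0 //; apply: open_meas.
Qed.


Lemma cont_comp_sub (f : G -> R) (y : G) : continuous f -> continuous (fun x => f (y - x)).
Proof.
move=> cf x; apply: (@continuous_comp _ _ _ (fun x => y - x) f); last exact: cf.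
apply: (@continuous_comp _ _ _ (fun x => (y, x)) (fun x : G * G => x.1 - x.2)); last exact: sub_continuous.
by apply: cvg_pair; [exact: cvg_cst|exact: cvg_id].
Qed.

Lemma cont_comp_subr (f : G -> R) (y : G) : continuous f -> continuous (fun x => f (x - y)).
Proof.
move=> cf x; apply: (@continuous_comp _ _ _ (fun x => x - y) f); last exact: cf.
exact: trans_cont.
Qed.

Lemma haar_inv (f : G -> R) (b : R) : continuous f ->
  let A := [set g | f g <= b] in
  measurable ([set p : Borel G * Borel G | A (p.2 - p.1)]) ->
  mu [set g | A (- g)] = mu A.
Proof.
move=> cf A mS.
have mA : measurable (A : set (Borel G)).
  by apply: (@cont_pre f `]-oo, b]) => //; exact: measurable_itv.
have mB : measurable ([set g | A (- g)] : set (Borel G)).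
  apply: (@cont_pre (fun g => f (- g)) `]-oo, b]); last exact: measurable_itv.
  by have := @cont_comp_sub f 0 cf; under eq_fun do rewrite sub0r.
have finmu : fin_num_fun mu.
  move=> U mU; rewrite ge0_fin_numE ?measure_ge0 //.
  case: hmu => mT _ _ _; rewrite (@le_lt_trans _ _ (mu setT)) //.
    by apply: le_measure => //; rewrite inE.
  by rewrite mT ltey.
have sf : sigma_finite setT mu by apply: fin_num_fun_sigma_finite => //; rewrite measure0.
pose H2 := isSFinite.Build _ _ _ _ (sfinite_measure_sigma_finite sf).
pose H3 := isSigmaFinite.Build _ _ _ _ sf.
pose mu' := HB.pack_for (SigmaFiniteMeasure.type (Borel G) R) (Measure.sort mu) H2 H3.
pose S := [set p : Borel G * Borel G | A (p.2 - p.1)].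
have := @fubini_tonelli _ _ _ _ R mu' mu' (EFin \o \1_S).
move=> fub.
have mf : measurable_fun setT (EFin \o \1_S : _ -> \bar R).
  by apply/measurable_EFinP; apply: measurable_indic.
have f0 : forall x : Borel G * Borel G, (0 <= ((EFin \o \1_S) x : \bar R))%E.
  by move=> x; rewrite /comp lee_fin.
move: {fub} (fub mf f0) => fub.
have L x : (\int[mu']_y (EFin \o \1_S) (x, y) = mu A)%E.
  have mSx : measurable ([set y | A (y - x)] : set (Borel G)).
    apply: (@cont_pre (fun y => f (y - x)) `]-oo, b]); last exact: measurable_itv.
    exact: cont_comp_subr.
  transitivity (\int[mu']_y (\1_([set y | A (y - x)] : set (Borel G)) y)%:E)%E.
    by apply: eq_integral.
  rewrite integral_indic // setIT.
  have -> : [set y | A (y - x)] = [set y | A (-x + y)].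
    by apply/seteqP; split=> y; rewrite /= addrC.
  exact: haar_trans.
have L2 y : (\int[mu']_x (EFin \o \1_S) (x, y) = mu [set g | A (- g)%R])%E.
  have mSy : measurable ([set x | A (y - x)] : set (Borel G)).
    apply: (@cont_pre (fun x => f (y - x)) `]-oo, b]); last exact: measurable_itv.
    exact: cont_comp_sub.
  transitivity (\int[mu']_x (\1_([set x | A (y - x)] : set (Borel G)) x)%:E)%E.
    by apply: eq_integral.
  rewrite integral_indic // setIT.
  have -> : [set x | A (y - x)] = [set x | [set g | A (- g)%R] (-y + x)%R].
    by apply/seteqP; split=> x; rewrite /= opprD opprK addrC.
  exact: haar_trans.
case: hmu => mT _ _ _.
have := fub; rewrite (eq_integral (fun _ => mu A)); last by move=> x _; exact: L.
rewrite [X in _ = X -> _](eq_integral (fun _ => mu [set g | A (- g)%R])); last by move=> y _; exact: L2.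
rewrite !integral_cst //= mT !mule1 => ->. done.
Qed.


Lemma cdf_full (f : G -> R) c : (forall g, f g <= c) ->
  mu ((f @^-1` `]-oo, c]) : set (Borel G)) = 1%E.
Proof.
case: hmu => mT _ _ _ h; rewrite -mT; congr (mu _).
by apply/seteqP; split => // g _ /=; rewrite in_itv /= h.
Qed.

Lemma cdf_lt (f : G -> R) c g0 : continuous f -> c < f g0 ->
  mu ((f @^-1` `]-oo, c]) : set (Borel G)) <> 1%E.
Proof.
move=> cf lt h.
case: hmu => mT _ _ _.
have mA : measurable ((f @^-1` `]-oo, c]) : set (Borel G)).
  by apply: cont_pre => //; exact: measurable_itv.
have mB : measurable ((f @^-1` `]c, +oo[) : set (Borel G)).
  by apply: cont_pre => //; exact: measurable_itv.
have pos : (0 < mu ((f @^-1` `]c, +oo[) : set (Borel G)))%E.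
  apply: open_pos.
    by apply: open_comp; [move=> x _; exact: cf|exact: interval_open].
  by exists g0; rewrite /= in_itv /= andbT.
have U := measureU mu mA mB.
have dis : ((f @^-1` `]-oo, c]) `&` (f @^-1` `]c, +oo[) : set (Borel G)) = set0.
  apply/seteqP; split => x // [] /=; rewrite !in_itv /= andbT => h1 h2.
  by move: (le_lt_trans h1 h2); rewrite ltxx.
have un : ((f @^-1` `]-oo, c]) `|` (f @^-1` `]c, +oo[) : set (Borel G)) = [set: Borel G].
  apply/seteqP; split => x // _ /=; rewrite !in_itv /= andbT.
  by case: (leP (f x) c) => hx; [left|right].
have e : (mu ((f @^-1` `]-oo, c]) : set (Borel G)) + mu ((f @^-1` `]c, +oo[) : set (Borel G)) = 1)%E.
  by rewrite -(U dis) un; exact: mT.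
rewrite h in e; move: pos e.
case: (mu _) => [r||] //=.
move=> r0 /eqP; rewrite -EFinD eqe => /eqP r1.
by move: r0; rewrite lte_fin; lra.
Qed.


Lemma key (J K : 'cV[R]_d) : K != 0 ->
  (forall t, t \in @unit_sphere R d -> mu_t mu rep J t = mu_t mu rep K t) ->
  exists g, dotv K K <= dotv (rep g *m J) K /\ dotv K K <= dotv J J.
Proof.
move=> K0 H.
have kpos : 0 < dotv K K.
  rewrite lt_neqAle dotv_ge0 andbT eq_sym; apply/eqP => /dotv_eq0 K00.
  by move: K0; rewrite K00 eqxx.
set s := Num.sqrt (dotv K K).
have s0 : 0 < s by rewrite sqrtr_gt0.
have ss : s * s = dotv K K by rewrite -expr2 sqr_sqrtr // ltW.
set t := s^-1 *: K.
have sn0 : s != 0 by rewrite gt_eqF.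
have tt : dotv t t = 1.
  rewrite dotvZl dotvZr -ss; field; done.
have Kt : dotv K t = s by rewrite dotvZr -ss; field.
pose phi g := dotv (rep g *m J) t.
have cphi : continuous phi := cont_dot J t.
have [gm _ hmax] := @compact_EVT_max G R phi [set: G] (ex_intro _ 0 I) cG (continuous_subspaceT cphi).
have sle : s <= phi gm.
  rewrite leNgt; apply/negP => lt.
  have e := H t (mem_set tt).
  have := congr1 (fun F => F (phi gm)) e; rewrite /mu_t /proj_law /pushforward /=.
  rewrite cdf_full; last by move=> g; apply: hmax; rewrite inE.
  move=> e2; apply: (@cdf_lt (fun g => dotv (rep g *m K) t) (phi gm) 0).
  - exact: cont_dot.
  - by rewrite rep0 mul1mx Kt.
  - by rewrite -e2.
exists gm; split.
  have -> : dotv (rep gm *m J) K = s * phi gm.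
    by rewrite /phi /t dotvZr mulrA divff // mul1r.
  by rewrite -ss ler_wpM2l // ltW.
have := @cs_unit R d (rep gm *m J) t tt; rewrite dot_rep -/(phi gm) => h.
rewrite -ss; nra.
Qed.


Lemma meas_prod (I t : 'cV[R]_d) b :
  measurable [set p : Borel G * Borel G | dotv I (rep (p.2 - p.1) *m t) <= b].
Proof.
pose Psi (p : Borel G * Borel G) := \sum_(i < d) I i ord0 *
   \sum_(j < d) rep p.2 i j * \sum_(k < d) rep p.1 k j * t k ord0.
have eP p : dotv I (rep (p.2 - p.1) *m t) = Psi p.
  rewrite repD repN -mulmxA /dotv /Psi; apply: eq_bigr => i _; congr (_ * _).
  rewrite mxE; apply: eq_bigr => j _; rewrite !mxE; congr (_ * _).
  by apply: eq_bigr => k _; rewrite mxE.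
have mPsi : measurable_fun setT Psi.
  apply: meas_sum => i; apply: meas_mul; first exact: measurable_cst.
  apply: meas_sum => j; apply: meas_mul.
    exact: (@measurableT_comp _ _ _ _ _ _ (fun g : Borel G => rep g i j) setT snd (meas_entry i j) measurable_snd).
  apply: meas_sum => k; apply: meas_mul; last exact: measurable_cst.
  exact: (@measurableT_comp _ _ _ _ _ _ (fun g : Borel G => rep g k j) setT fst (meas_entry k j) measurable_fst).
have := mPsi measurableT _ (measurable_itv `]-oo, b]); rewrite setTI.
congr measurable; apply/seteqP; split => p /=; rewrite in_itv /= eP //.
Qed.


Lemma dotv0 (u : 'cV[R]_d) : dotv 0 u = 0.
Proof. by rewrite /dotv big1 // => i _; rewrite mxE mul0r. Qed.

Lemma part1 (I t : 'cV[R]_d) (b : R) :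
  mu_t mu rep I t b
  = (\int[mu]_(g in [set: Borel G]) (eta_step b (dotv I (rep g *m t)))%:E)%E.
Proof.
pose psi g := dotv I (rep g *m t).
have cpsi : continuous psi.
  have -> : psi = fun g => dotv (rep g *m t) I by apply/funext => g; rewrite /psi dotvC.
  exact: cont_dot.
rewrite /mu_t /proj_law /pushforward.
have -> : ((fun g : Borel G => dotv (rep g *m I) t) @^-1` `]-oo, b]) =
   [set g | [set g | psi g <= b] (- g)].
  apply/seteqP; split => g; rewrite /= in_itv /= /psi dotv_mull -repN //.
have := @haar_inv psi b cpsi (meas_prod I t b); move=> /= ->.
have mA : measurable ([set g | psi g <= b] : set (Borel G)).
  have -> : [set g | psi g <= b] = psi @^-1` `]-oo, b].
    by apply/seteqP; split => g; rewrite /= in_itv.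
  by apply: cont_pre => //; exact: measurable_itv.
rewrite (eq_integral (fun g => (\1_([set g | psi g <= b] : set (Borel G)) g)%:E)).
  by rewrite integral_indic // setIT.
move=> g _; rewrite indicE /eta_step /heaviside subr_ge0 -/(psi g).
have [h|h] := boolP (psi g <= b).
  by rewrite mem_set.
by rewrite memNset // => /= h'; move: h; rewrite h'.
Qed.


Lemma part2 (I I' : 'cV[R]_d) :
  orbit_equiv rep I I' <->
  (forall t : 'cV[R]_d, t \in @unit_sphere R d -> mu_t mu rep I t = mu_t mu rep I' t).
Proof.
split.
  move=> [h <-] t _; apply/funext => b.
  rewrite /mu_t /proj_law /pushforward.
  pose phi g := dotv (rep g *m I) t.
  have mA : measurable ((phi @^-1` `]-oo, b]) : set (Borel G)).
    by apply: cont_pre; [exact: cont_dot|exact: measurable_itv].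
  rewrite -(haar_trans _ h mA); congr (mu _); apply/seteqP; split => g /=;
    by rewrite /phi mulmxA -repD addrC.
move=> H.
have H' : forall t, t \in @unit_sphere R d -> mu_t mu rep I' t = mu_t mu rep I t.
  by move=> t ht; rewrite H.
have [I'0|I'n0] := eqVneq I' 0.
  have [I0|In0] := eqVneq I 0.
    by exists 0; rewrite rep0 mul1mx I0 I'0.
  have [g [h1 h2]] := key I' I In0 H'.
  move: h2; rewrite I'0 dotv0 => h2.
  have : dotv I I = 0 by apply/eqP; rewrite eq_le h2 dotv_ge0.
  by move/dotv_eq0 => I00; move: In0; rewrite I00 eqxx.
have [g [h1 h2]] := key I I' I'n0 H.
have h3 : dotv I I <= dotv I' I'.
  have [I0|In0] := eqVneq I 0.
    by rewrite I0 dotv0 dotv_ge0.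
  by have [g' [_ ]] := key I' I In0 H'.
exists g; apply/eqP; rewrite -subr_eq0; apply/eqP/dotv_eq0.
apply/eqP; rewrite eq_le dotv_ge0 andbT.
rewrite dotvDl dotvNl !dotvDr !dotvNr dot_rep (@dotvC R d I' (rep g *m I)).
lra.
Qed.
End Main.

Theorem theorem5 (R : realType) (G : topologicalZmodType) (d : nat)
    (mu : {measure set (Borel G) -> \bar R}) (rep : G -> 'M[R]_d) :
  hausdorff_space G -> compact [set: G] ->
  normalized_haar mu -> unitary_rep rep ->
  (forall (I t : 'cV[R]_d), t \in @unit_sphere R d -> forall b : R,
      mu_t mu rep I t b
      = (\int[mu]_(g in [set: Borel G]) (eta_step b (dotv I (rep g *m t)))%:E)%E)
  /\
  (forall I I' : 'cV[R]_d,
      orbit_equiv rep I I' <->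
      (forall t : 'cV[R]_d, t \in @unit_sphere R d -> mu_t mu rep I t = mu_t mu rep I' t)).
Proof.
move=> hG cG hmu hrep; split.
  by move=> I t _ b; exact: part1.
by move=> I I'; exact: part2.
Qed.
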